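(* Let $n\ge1$, let $\mathcal W$ be an $(n,T(n))$-weakly Ramsey non-P-point in standard position on $\omega^2$, let $\tau$ be any $n$-type, and let $[\omega^2]_\tau$ be partitioned into finitely many pieces. Then there is $H\in\mathcal W$ such that $[H]_\tau$ is included in one of the pieces.
   Context: Ultrafilters are nonprincipal. A non-P-point in standard position is an ultrafilter $\mathcal W$ on $\omega^2$ such that the first projection $\pi_1:\omega^2\to\omega$ is neither finite-to-one nor constant on any set in $\mathcal W$. For a countably infinite set $S$, an ultrafilter $\mathcal W$ on $S$ is $(n,t)$-weakly Ramsey if whenever $[S]^n$ (the $n$-element subsets of $S$) is partitioned into finitely many pieces, there is $H\in\mathcal W$ with $[H]^n$ meeting at most $t$ pieces. An $n$-type is a linear pre-order of the $2n$ formal symbols $x_1,\dots,x_n,y_1,\dots,y_n$ such that $y_1<\dots<y_n$ (strictly), each $x_i<y_i$ strictly, and any two distinct equivalent symbols are both $x$'s. An $n$-element set $\{\langle a_1,b_1\rangle,\dots,\langle a_n,b_n\rangle\}\subseteq\omega^2$, listed so that $b_1<\dots<b_n$ (which requires distinct second coordinates), realizes the $n$-type $\tau$ if for all symbols $s,t$ we have $s\le_\tau t$ iff $v(s)\le v(t)$, where $v(x_i)=a_i$, $v(y_i)=b_i$. $T(n)$ is the number of $n$-types. For $S\subseteq\omega^2$, $[S]_\tau$ is the set of $n$-element subsets of $S$ realizing $\tau$. *)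

(* Defs.v *)
From HB Require Import structures.
From mathcomp Require Import all_boot.
Set Implicit Arguments.
Unset Strict Implicit.
Unset Printing Implicit Defensive.

(* omega^2 = nat * nat; subsets of omega^2 are predicates. *)
Definition point := (nat * nat)%type.
Definition pset := point -> Prop.

Record ultrafilter (W : pset -> Prop) : Prop := {
  uf_full : W (fun _ => True);
  uf_proper : ~ W (fun _ => False);
  uf_up : forall A B : pset, (forall x, A x -> B x) -> W A -> W B;
  uf_cap : forall A B : pset, W A -> W B -> W (fun x => A x /\ B x);
  uf_ultra : forall A : pset, W A \/ W (fun x => ~ A x)
}.

(* Nonprincipal: no singleton belongs to W (equivalently every co-singleton does). *)
Definition nonprincipal (W : pset -> Prop) : Prop :=
  forall x : point, W (fun y => y <> x).

Definition pi1_constant_on (X : pset) : Prop :=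
  exists a, forall p, X p -> p.1 = a.
Definition pi1_finite_to_one_on (X : pset) : Prop :=
  forall a, exists m, forall p, X p -> p.1 = a -> p.2 < m.
Definition non_P_point_std (W : pset -> Prop) : Prop :=
  forall X, W X -> ~ pi1_constant_on X /\ ~ pi1_finite_to_one_on X.

(* Canonical representation of finite subsets of omega^2: lists strictly
   sorted in lexicographic order. *)
Definition lexlt : rel point :=
  fun p q => (p.1 < q.1) || ((p.1 == q.1) && (p.2 < q.2)).

Definition nsubset (n : nat) (S : pset) (s : seq point) : Prop :=
  [/\ sorted lexlt s, size s = n & forall x, x \in s -> S x].

(* (n,t)-weakly Ramsey: every partition of [omega^2]^n into finitely many
   pieces (a colouring c into 'I_k) has a homogeneous-ish H in W with
   [H]^n meeting at most t pieces. *)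
Definition weakly_ramsey (n t : nat) (W : pset -> Prop) : Prop :=
  forall (k : nat) (c : seq point -> 'I_k),
    exists H : pset, W H /\
      exists C : {set 'I_k}, #|C| <= t /\
        forall s, nsubset n H s -> c s \in C.

(* n-types.  Symbols: inl i = x_(i+1), inr i = y_(i+1). *)
Definition sym (n : nat) := ('I_n + 'I_n)%type.
Definition ntype_rel (n : nat) := {ffun (sym n * sym n) -> bool}.

Definition is_xsym n (s : sym n) : bool := if s is inl _ then true else false.

Definition is_ntype n (r : ntype_rel n) : bool :=
  let strict s t := r (s, t) && ~~ r (t, s) in
  [&& [forall s : sym n, r (s, s)],
      [forall s : sym n, forall t : sym n, forall u : sym n,
          r (s, t) ==> r (t, u) ==> r (s, u)],
      [forall s : sym n, forall t : sym n, r (s, t) || r (t, s)],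
      [forall i : 'I_n, forall j : 'I_n,
          (i < j) ==> strict (inr i) (inr j)],
      [forall i : 'I_n, strict (inl i) (inr i)] &
      [forall s : sym n, forall t : sym n,
          [&& r (s, t), r (t, s) & s != t] ==> (is_xsym s && is_xsym t)]].

Definition T (n : nat) : nat := #|[pred r : ntype_rel n | is_ntype r]|.

Definition sym_val n (t : seq point) (s : sym n) : nat :=
  match s with
  | inl i => (nth (0, 0) t i).1
  | inr i => (nth (0, 0) t i).2
  end.

Definition realizes n (r : ntype_rel n) (s : seq point) : Prop :=
  exists t : seq point,
    [/\ perm_eq s t, sorted (fun p q : point => p.2 < q.2) t &
        forall a b : sym n, r (a, b) = (sym_val t a <= sym_val t b)].

(* Main.v *)
Require Import Defs.
From mathcomp Require Import all_boot zify.
From Stdlib Require Import ClassicalEpsilon Classical.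
Set Implicit Arguments.
Unset Strict Implicit.

Section Facts.
Variables (n : nat) (r : ntype_rel n) (hr : is_ntype r).

Lemma hr6 : let strict s t := r (s, t) && ~~ r (t, s) in
  [/\ [forall s : sym n, r (s, s)],
      [forall s : sym n, forall t : sym n, forall u : sym n,
          r (s, t) ==> r (t, u) ==> r (s, u)],
      [forall s : sym n, forall t : sym n, r (s, t) || r (t, s)],
      [forall i : 'I_n, forall j : 'I_n,
          (i < j) ==> strict (inr i) (inr j)] &
      [forall i : 'I_n, strict (inl i) (inr i)] /\
      [forall s : sym n, forall t : sym n,
          [&& r (s, t), r (t, s) & s != t] ==> (is_xsym s && is_xsym t)]].
Proof. by move: hr => /andP[h1 /andP[h2 /andP[h3 /andP[h4 /andP[h5 h6]]]]]; split. Qed.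

Lemma r_refl s : r (s, s).
Proof. by case: hr6 => /forallP h _ _ _ _. Qed.
Lemma r_trans s t u : r (s, t) -> r (t, u) -> r (s, u).
Proof. case: hr6 => _ /forallP h _ _ _.
by move: (h s) => /forallP/(_ t)/forallP/(_ u)/implyP H /H/implyP. Qed.
Lemma r_total s t : r (s, t) || r (t, s).
Proof. by case: hr6 => _ _ /forallP/(_ s)/forallP/(_ t) h _ _. Qed.
Lemma r_y (i j : 'I_n) : i < j -> ~~ r (inr j, inr i).
Proof. case: hr6 => _ _ _ /forallP/(_ i)/forallP/(_ j)/implyP h _.
by move=> /h/andP[]. Qed.
Lemma r_xy (i : 'I_n) : ~~ r (inr i, inl i).
Proof. by case: hr6 => _ _ _ _ [/forallP/(_ i)/andP[] _ h _]. Qed.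
Lemma r_eq s t : r (s, t) -> r (t, s) -> s != t -> is_xsym s && is_xsym t.
Proof. case: hr6 => _ _ _ _ [_ /forallP/(_ s)/forallP/(_ t)/implyP h].
by move=> a b c; apply: h; rewrite a b c. Qed.

Definition rk (s : sym n) := #|[pred u | r (u, s) && ~~ r (s, u)]|.

Lemma rk_le a b : r (a, b) = (rk a <= rk b).
Proof.
case E: (r (a, b)).
  apply/esym/subset_leq_card/subsetP => u; rewrite !inE => /andP[h1 h2].
  rewrite (r_trans h1 E) /=; apply/negP => hb; by rewrite (r_trans E hb) in h2.
have Eb : r (b, a) by move: (r_total a b); rewrite E.
apply/esym/negbTE; rewrite -ltnNge; apply: proper_card; apply/properP; split.
  apply/subsetP => u; rewrite !inE => /andP[h1 h2].
  rewrite (r_trans h1 Eb) /=; apply/negP => ha; by rewrite (r_trans ha h1) in E.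
by exists b; rewrite !inE ?Eb ?E // r_refl.
Qed.

Lemma rk_eq a b : rk a = rk b -> a != b -> is_xsym a && is_xsym b.
Proof. move=> e; apply: r_eq; by rewrite rk_le e. Qed.

Lemma rk_lt_xy (i : 'I_n) : rk (inl i) < rk (inr i).
Proof. by rewrite ltnNge -rk_le r_xy. Qed.
Lemma rk_lt_y (i j : 'I_n) : i < j -> rk (inr i) < rk (inr j).
Proof. by move=> h; rewrite ltnNge -rk_le r_y. Qed.
End Facts.

Definition infcol (H : pset) (a : nat) := forall m, exists b, m <= b /\ H (a, b).

Lemma col_in_W (W : pset -> Prop) (H : pset) : ultrafilter W ->
  forall M, W (fun p => H p /\ p.1 < M) -> exists a, W (fun p => H p /\ p.1 = a).
Proof.
move=> U; elim=> [|M IH] hW.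
  exfalso; apply: (uf_proper U); apply: (uf_up U _ hW) => p [_].
  by rewrite ltn0.
case: (uf_ultra U (fun p => p.1 = M)) => hc.
  exists M; apply: (uf_up U _ (uf_cap U hW hc)) => p [[]]; by [].
apply: IH; apply: (uf_up U _ (uf_cap U hW hc)) => p [[hp hl] hne]; split=> //.
by lia.
Qed.

Lemma infcols (W : pset -> Prop) (H : pset) : ultrafilter W -> non_P_point_std W ->
  W H -> forall M, exists a, M <= a /\ infcol H a.
Proof.
move=> U NP hH M; apply: NNPP => hno.
have hfin : forall a, M <= a -> exists m, forall b, m <= b -> ~ H (a, b).
  move=> a ha; have : ~ infcol H a by move=> hi; apply: hno; exists a.
  move/not_all_ex_not => [m hm]; exists m => b hb hab; apply: hm; by exists b.
have nW2 : ~ W (fun p => H p /\ M <= p.1).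
  move=> hW; case: (NP _ hW) => _; apply=> a.
  case: (leqP M a) => ha.
    case: (hfin a ha) => m hm; exists m => p [hp _] e.
    rewrite ltnNge; apply/negP => hle; apply: (hm p.2 hle).
    by rewrite -e -surjective_pairing.
  by exists 0 => p [_ hp] e; lia.
have hW1 : W (fun p => H p /\ p.1 < M).
  case: (uf_ultra U (fun p => H p /\ M <= p.1)) => // hc.
  apply: (uf_up U _ (uf_cap U hH hc)) => p [hp hn]; split=> //.
  rewrite ltnNge; apply/negP => h; by apply: hn.
case: (col_in_W U hW1) => a ha.
by case: (NP _ ha) => hc _; apply: hc; exists a => p [].
Qed.

Lemma build n (r : ntype_rel n) (hr : is_ntype r) (H : pset)
  (hcol : forall M, exists a, M <= a /\ infcol H a) :
  forall k, exists f : nat -> nat,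
   [/\ (forall i j, i < j -> j < k -> f i < f j),
       (forall i : 'I_n, rk r (inl i) < k -> infcol H (f (rk r (inl i)))) &
       (forall j : 'I_n, rk r (inr j) < k -> H (f (rk r (inl j)), f (rk r (inr j))))].
Proof.
elim=> [|k [f [f1 f2 f3]]].
  by exists (fun _ => 0); split.
have hm : forall i, i < k -> f i < (if k is k'.+1 then (f k').+1 else 0).
  case: k f1 f2 f3 => [//|k'] f1 _ _ i hi.
  case: (ltngtP i k') => [h|h|->]; last by [].
  - by apply: ltn_trans (f1 _ _ h (ltnSn _)) _.
  - by lia.
move: hm; set m := (if k is k'.+1 then _ else _) => hm.
suff [v [hv [Q1 Q2]]] : exists v, m <= v /\
   (forall i : 'I_n, rk r (inl i) = k -> infcol H v) /\
   (forall j : 'I_n, rk r (inr j) = k -> H (f (rk r (inl j)), v)).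
  exists (fun i => if i == k then v else f i); split.
  - move=> i j hij hj; have hik : i != k by lia.
    rewrite /= (negbTE hik); case: ifP => hjk.
      by apply: leq_trans (hm _ _) hv; lia.
    by apply: f1 => //; lia.
  - move=> i hi /=; case: eqP => [e|ne]; first exact: (Q1 i e).
    by apply: f2; lia.
  - move=> j hj; have hlt := rk_lt_xy hr j.
    have hne : rk r (inl j) != k by lia.
    rewrite /= (negbTE hne); case: eqP => [e|ne]; first exact: Q2.
    by apply: f3; lia.
case: (boolP [exists j : 'I_n, rk r (inr j) == k]).
  move/existsP=> [j /eqP hj].
  have hlt := rk_lt_xy hr j.
  have [b [hb1 hb2]] := f2 j (ltac:(lia)) m.
  exists b; split=> //; split.
    move=> i hi; exfalso; have := rk_eq hr (etrans hi (esym hj)).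
    by move/(_ isT).
  move=> j' hj'; case: (eqVneq j' j) => [->|ne]; first done.
  exfalso; have hne : (inr j' : sym n) != inr j by [].
  by have := rk_eq hr (etrans hj' (esym hj)) hne.
move/existsP=> hno.
have [a [ha1 ha2]] := hcol m.
exists a; split=> //; split=> // j hj; exfalso; apply: hno; exists j; exact/eqP.
Qed.


Definition lexle : rel point := fun p q => lexlt p q || (p == q).

Lemma lexle_total : total lexle.
Proof. move=> [a b] [c d]; rewrite /lexle /lexlt /= !xpair_eqE /=; lia. Qed.

Lemma sorted_lexlt (s : seq point) : sorted lexle s -> uniq s -> sorted lexlt s.
Proof.
case: s => // x s; elim: s x => // y s IH x /= /andP[hxy hp] /andP[hx hu].
have -> : path lexlt y s by apply: IH.
move: hxy hx; rewrite /lexle inE; case: (lexlt x y) => //= /eqP ->.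
by rewrite eqxx.
Qed.

Lemma realize_all (W : pset -> Prop) (H : pset) : ultrafilter W -> non_P_point_std W ->
  W H -> forall n (sg : ntype_rel n), is_ntype sg ->
  exists s, nsubset n H s /\ realizes sg s.
Proof.
move=> U NP hH n sg hs.
have [f [f1 f2 f3]] := build hs (infcols U NP hH) (#|{: sym n}|.+1).
have hK : forall a, rk sg a < #|{: sym n}|.+1 by move=> a; rewrite ltnS max_card.
have fmono : forall a b, (f (rk sg a) <= f (rk sg b)) = (rk sg a <= rk sg b).
  move=> a b; case: (ltngtP (rk sg a) (rk sg b)) => [h|h|e].
  - exact (ltnW (f1 _ _ h (hK _))).
  - by apply/negbTE; rewrite -ltnNge; exact (f1 _ _ h (hK _)).
  - by rewrite e !leqnn.
pose F (j : 'I_n) : point := (f (rk sg (inl j)), f (rk sg (inr j))).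
pose t := [seq F j | j <- enum 'I_n].
have ht : sorted (fun p q : point => p.2 < q.2) t.
  rewrite sorted_map.
  have : sorted (fun i j : 'I_n => i < j) (enum 'I_n).
    by have := iota_ltn_sorted 0 n; rewrite -val_enum_ord sorted_map.
  apply: sub_sorted => i j /= hij.
  by rewrite ltnNge fmono -ltnNge; apply: rk_lt_y.
have hu : uniq t.
  apply: (sorted_uniq _ _ ht).
    by move=> x y z /=; apply: ltn_trans.
  by move=> x /=; rewrite ltnn.
exists (sort lexle t); split.
  split.
  - apply: sorted_lexlt; first exact (sort_sorted lexle_total t).
    by rewrite sort_uniq.
  - by rewrite size_sort size_map size_enum_ord.
  - move=> x; rewrite mem_sort => /mapP [j _ ->].
    by apply: f3.
exists t; split => //.
  by rewrite perm_sort.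
have sv : forall a, sym_val t a = f (rk sg a).
  case=> i /=; rewrite /t (nth_map i) ?size_enum_ord // nth_ord_enum //.
by move=> a b; rewrite !sv fmono (rk_le hs).
Qed.

Lemma realize_uniq n (s1 s2 : ntype_rel n) s : realizes s1 s -> realizes s2 s -> s1 = s2.
Proof.
move=> [t1 [p1 o1 e1]] [t2 [p2 o2 e2]].
have et : t1 = t2.
  apply: (irr_sorted_eq _ _ o1 o2).
  - by move=> x y z /=; apply: ltn_trans.
  - by move=> x /=; rewrite ltnn.
  - by move=> x; rewrite -(perm_mem p1) -(perm_mem p2).
apply/ffunP => -[a b]; by rewrite e1 e2 et.
Qed.

Theorem mainTheorem2 (n : nat) (W : pset -> Prop) :
  1 <= n ->
  ultrafilter W -> nonprincipal W -> non_P_point_std W ->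
  weakly_ramsey n (T n) W ->
  forall tau : ntype_rel n, is_ntype tau ->
  forall (k : nat) (c : seq point -> 'I_k),
    exists H : pset, W H /\
      exists i : 'I_k, forall s, nsubset n H s -> realizes tau s -> c s = i.
Proof.
move=> hn U NP0 NP WR tau htau k c.
pose ty s := epsilon (inhabits tau) (fun sg => realizes sg s).
have tyE : forall sg s, realizes sg s -> ty s = sg.
  move=> sg s h; apply: (realize_uniq _ h).
  by apply: (epsilon_spec (inhabits tau) (fun sg => realizes sg s)); exists sg.
pose K := (ntype_rel n * option 'I_k)%type.
pose col s : K := (ty s, if ty s == tau then Some (c s) else None).
have [H [hH [C [hC hCs]]]] := WR _ (fun s => enum_rank (col s)).
have [s0 [hs0 hr0]] := realize_all U NP hH htau.
exists H; split=> //; exists (c s0) => s hs hr.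
apply/eqP; apply: contraT => hne.
pose g sg := enum_rank ((if sg == tau then (tau, Some (c s0)) else (sg, None)) : K).
have ginj : injective g.
  move=> x y /enum_rank_inj.
  case: ifP => hx; case: ifP => hy => e.
  - by rewrite (eqP hx) (eqP hy).
  - by case: e.
  - by case: e.
  - by case: e.
have sub : (enum_rank ((tau, Some (c s)) : K) |: [set g sg | sg in [pred r | is_ntype r]])
             \subset C.
  apply/subsetP => x; rewrite in_setU1 => /orP[/eqP ->|].
    have := hCs s hs; by rewrite /col (tyE _ _ hr) eqxx.
  case/imsetP => sg; rewrite inE => hsg ->.
  rewrite /g; case: ifP => hne'.
    have := hCs s0 hs0; by rewrite /col (tyE _ _ hr0) eqxx.
  have [ss [hss hrs]] := realize_all U NP hH hsg.
  have := hCs ss hss; by rewrite /col (tyE _ _ hrs) hne'.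
have notin : enum_rank ((tau, Some (c s)) : K) \notin [set g sg | sg in [pred r | is_ntype r]].
  apply/imsetP => -[sg _ /enum_rank_inj].
  case: (eqVneq sg tau) => [_ [e]|hsg [e]].
    by rewrite e eqxx in hne.
  by rewrite e eqxx in hsg.
have := subset_leq_card sub; rewrite cardsU1 notin card_imset //.
rewrite /T in hC => h; move: (leq_trans h hC); by rewrite /= add1n ltnn.
Qed.
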